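(* Let $\mathcal U,\mathcal V,\mathcal X$ be real finite-dimensional Euclidean spaces, $f:\mathcal U\to(-\infty,+\infty]$ closed proper convex, $g(v)=\frac12\langle v,\Sigma_g v\rangle-\langle b,v\rangle$ with $\Sigma_g\succeq0$ self-adjoint and $b\in\mathcal V$, $\mathcal F:\mathcal X\to\mathcal U$, $\mathcal G:\mathcal X\to\mathcal V$ linear, $c\in\mathcal X$, $\sigma>0$, $\tau>0$, and $\mathcal L_\sigma(u,v;x)=f(u)+g(v)+\langle x,\mathcal F^*u+\mathcal G^*v-c\rangle+\frac\sigma2\|\mathcal F^*u+\mathcal G^*v-c\|^2$. Let $\mathcal E_g\succ0$ be self-adjoint with $\mathcal E_g\succeq\sigma^{-1}\Sigma_g+\mathcal G\mathcal G^*$, $\mathcal T_g:=\mathcal E_g-\sigma^{-1}\Sigma_g-\mathcal G\mathcal G^*$, $\mathcal T_f\succeq0$ self-adjoint on $\mathcal U$, $\widehat{\mathcal T}_f:=\mathcal T_f+\mathcal F\mathcal G^*\mathcal E_g^{-1}\mathcal G\mathcal F^*$. Let $\{(u^k,v^k,x^k)\}$ be generated by Algorithm SCB-SPALM: $(u^0,v^0,x^0)\in\mathrm{dom}f\times\mathcal V\times\mathcal X$ and $$(u^{k+1},v^{k+1})=\operatorname{argmin}_{u,v}\ \mathcal L_\sigma(u,v;x^k)+\tfrac\sigma2\|u-u^k\|^2_{\widehat{\mathcal T}_f}+\tfrac\sigma2\|v-v^k\|^2_{\mathcal T_g},\quad x^{k+1}=x^k+\tau\sigma(\mathcal F^*u^{k+1}+\mathcal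 G^*v^{k+1}-c).$$ Define $\delta_g(u,v,x):=\mathcal F\mathcal G^*\mathcal E_g^{-1}\big(b-\mathcal Gx-\Sigma_g v+\sigma\mathcal G(c-\mathcal F^*u-\mathcal G^*v)\big)$ and $\delta_g^k:=\delta_g(u^k,v^k,x^k)$. Then for every $k\ge0$, $u^{k+1},v^{k+1},x^{k+1}$ can be generated exactly by $$u^{k+1}=\operatorname{argmin}_u\ \mathcal L_\sigma(u,v^k;x^k)+\langle\delta_g^k,u\rangle+\tfrac\sigma2\|u-u^k\|^2_{\mathcal T_f},$$ $$v^{k+1}=\operatorname{argmin}_v\ \mathcal L_\sigma(u^{k+1},v;x^k)+\tfrac\sigma2\|v-v^k\|^2_{\mathcal T_g},$$ $$x^{k+1}=x^k+\tau\sigma(\mathcal F^*u^{k+1}+\mathcal G^*v^{k+1}-c).$$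
   Context: $\|w\|_{\mathcal T}^2:=\langle w,\mathcal T w\rangle$; $\succ0$/$\succeq0$ denote positive definite/semidefinite. *)

(* Defs.v *)
(* Euclidean spaces are modelled as R^n
   ('cV[R]_n) with the standard inner product; linear maps as matrices,
   adjoints as transposes. *)
From HB Require Import structures.
From mathcomp Require Import all_boot all_order all_algebra.
From mathcomp Require Import all_classical all_reals all_analysis.
Set Implicit Arguments. Unset Strict Implicit. Unset Printing Implicit Defensive.
Import Order.TTheory GRing.Theory Num.Theory numFieldNormedType.Exports.
Local Open Scope ring_scope.

Definition ip {R : realType} {n : nat} (a b : 'cV[R]_n) : R :=
  \sum_(i < n) a i 0 * b i 0.

Definition qnorm {R : realType} {n : nat} (T : 'M[R]_n) (w : 'cV[R]_n) : R :=
  ip w (T *m w).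

Definition self_adjoint {R : realType} {n : nat} (T : 'M[R]_n) : Prop := T^T = T.
Definition psd {R : realType} {n : nat} (T : 'M[R]_n) : Prop :=
  self_adjoint T /\ forall w : 'cV[R]_n, 0 <= qnorm T w.
Definition pd {R : realType} {n : nat} (T : 'M[R]_n) : Prop :=
  self_adjoint T /\ forall w : 'cV[R]_n, w != 0 -> 0 < qnorm T w.

Definition proper_fun {R : realType} {n : nat} (f : 'cV[R]_n -> \bar R) : Prop :=
  (forall u, f u != -oo%E) /\ exists u, f u != +oo%E.
Definition convex_fun {R : realType} {n : nat} (f : 'cV[R]_n -> \bar R) : Prop :=
  forall (u w : 'cV[R]_n) (t : R), 0 < t -> t < 1 ->
    (f (t *: u + (1 - t) *: w)%R <= t%:E * f u + (1 - t)%:E * f w)%E.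
(* closed = lower semicontinuous *)
Definition closed_fun {R : realType} {n : nat} (f : 'cV[R]_n -> \bar R) : Prop :=
  forall (u : 'cV[R]_n) (a : R), (a%:E < f u)%E ->
    \forall w \near u, (a%:E < f w)%E.

Definition gquad {R : realType} {nv : nat} (Sg : 'M[R]_nv) (b v : 'cV[R]_nv) : R :=
  2^-1 * ip v (Sg *m v) - ip b v.

Definition Lsig {R : realType} {nu nv nx : nat} (f : 'cV[R]_nu -> \bar R)
  (Sg : 'M[R]_nv) (b : 'cV[R]_nv) (F : 'M[R]_(nu, nx)) (G : 'M[R]_(nv, nx))
  (c : 'cV[R]_nx) (sigma : R) (u : 'cV[R]_nu) (v : 'cV[R]_nv) (x : 'cV[R]_nx)
  : \bar R :=
  let r := F^T *m u + G^T *m v - c in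
  (f u + (gquad Sg b v + ip x r + sigma / 2 * ip r r)%:E)%E.

Definition delta_g {R : realType} {nu nv nx : nat}
  (Sg : 'M[R]_nv) (b : 'cV[R]_nv) (F : 'M[R]_(nu, nx)) (G : 'M[R]_(nv, nx))
  (c : 'cV[R]_nx) (sigma : R) (Eg : 'M[R]_nv)
  (u : 'cV[R]_nu) (v : 'cV[R]_nv) (x : 'cV[R]_nx) : 'cV[R]_nu :=
  F *m G^T *m invmx Eg *m
    (b - G *m x - Sg *m v + sigma *: (G *m (c - F^T *m u - G^T *m v))).

(* Main.v *)
Require Import Defs.
From mathcomp Require Import all_boot all_order all_algebra.
From mathcomp Require Import all_classical all_reals all_analysis.
From mathcomp Require Import ring lra.
Import Order.TTheory GRing.Theory Num.Theory numFieldNormedType.Exports.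
Local Open Scope ring_scope.

Set Implicit Arguments. Unset Strict Implicit.
Section S.
Context (R : realType).
Implicit Types (n m : nat).
Lemma ip_mx n (a b : 'cV[R]_n) : ip a b = (a^T *m b) 0 0.
Proof. rewrite /ip mxE; apply: eq_bigr => i _; by rewrite mxE. Qed.
Lemma ipC n (a b : 'cV[R]_n) : ip a b = ip b a.
Proof. rewrite /ip; apply: eq_bigr => i _; by rewrite mulrC. Qed.
Lemma ipDl n (a b c : 'cV[R]_n) : ip (a + b) c = ip a c + ip b c.
Proof. rewrite /ip -big_split; apply: eq_bigr => i _; by rewrite mxE mulrDl. Qed.
Lemma ipZl n k (a b : 'cV[R]_n) : ip (k *: a) b = k * ip a b.
Proof. rewrite /ip mulr_sumr; apply: eq_bigr => i _; by rewrite mxE mulrA. Qed.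
Lemma ipNl n (a b : 'cV[R]_n) : ip (- a) b = - ip a b.
Proof. by rewrite -scaleN1r ipZl mulN1r. Qed.
Lemma ipBl n (a b c : 'cV[R]_n) : ip (a - b) c = ip a c - ip b c.
Proof. by rewrite ipDl ipNl. Qed.
Lemma ipDr n (a b c : 'cV[R]_n) : ip c (a + b) = ip c a + ip c b.
Proof. by rewrite ipC ipDl ![ip c _]ipC. Qed.
Lemma ipBr n (a b c : 'cV[R]_n) : ip c (a - b) = ip c a - ip c b.
Proof. by rewrite ipC ipBl ![ip c _]ipC. Qed.
Lemma ipZr n k (a b : 'cV[R]_n) : ip a (k *: b) = k * ip a b.
Proof. by rewrite ipC ipZl ipC. Qed.
Lemma ip0r n (a : 'cV[R]_n) : ip a 0 = 0.
Proof. by rewrite -(scale0r 0) ipZr mul0r. Qed.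
Lemma ipMl m n (M : 'M[R]_(m,n)) a b : ip (M *m a) b = ip a (M^T *m b).
Proof. by rewrite !ip_mx trmx_mul mulmxA. Qed.
Lemma ipMr m n (M : 'M[R]_(m,n)) a b : ip a (M *m b) = ip (M^T *m a) b.
Proof. by rewrite ipMl trmxK. Qed.

Lemma qnormDM n (M N : 'M[R]_n) a : qnorm (M + N) a = qnorm M a + qnorm N a.
Proof. by rewrite /qnorm mulmxDl ipDr. Qed.
Lemma qnormBM n (M N : 'M[R]_n) a : qnorm (M - N) a = qnorm M a - qnorm N a.
Proof. by rewrite /qnorm mulmxBl ipBr. Qed.
Lemma qnormZM n k (M : 'M[R]_n) a : qnorm (k *: M) a = k * qnorm M a.
Proof. by rewrite /qnorm -scalemxAl ipZr. Qed.
Lemma qnormD n (M : 'M[R]_n) a d : M^T = M ->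
  qnorm M (a + d) = qnorm M a + 2 * ip (M *m a) d + qnorm M d.
Proof.
move=> sM; rewrite /qnorm mulmxDr !ipDl !ipDr (ipMr M a d) sM (ipC d (M *m a)).
ring.
Qed.
Lemma qnormZ n (M : 'M[R]_n) k a : qnorm M (k *: a) = k ^+ 2 * qnorm M a.
Proof. by rewrite /qnorm -scalemxAr ipZl ipZr mulrA expr2. Qed.
Lemma ipq n m (A : 'M[R]_(n,m)) r d :
  ip (r + A^T *m d) (r + A^T *m d) = ip r r + 2 * ip (A *m r) d + qnorm (A *m A^T) d.
Proof.
rewrite !ipDl !ipDr (ipC (A^T *m d) r) (ipMr (A^T) r d) (ipMl (A^T) d (A^T *m d)).
rewrite !trmxK /qnorm mulmxA; ring.
Qed.
Lemma ipx n m (A : 'M[R]_(n,m)) x r d :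
  ip x (r + A^T *m d) = ip x r + ip (A *m x) d.
Proof. by rewrite ipDr ipMr trmxK. Qed.
Lemma ipg n (a b e w d : 'cV[R]_n) k :
  ip (a - b + e + k *: w) d = ip a d - ip b d + ip e d + k * ip w d.
Proof. by rewrite !ipDl ipNl ipZl. Qed.
Lemma qnormMM n m (M : 'M[R]_n) (A : 'M[R]_(n,m)) a :
  qnorm M (A *m a) = qnorm (A^T *m M *m A) a.
Proof. by rewrite /qnorm ipMl !mulmxA. Qed.
End S.
Section T.
Context (R : realType) (nu nv nx : nat).
Context (Sg : 'M[R]_nv) (b : 'cV[R]_nv) (F : 'M[R]_(nu, nx)) (G : 'M[R]_(nv, nx))
  (c : 'cV[R]_nx) (sigma : R) (E : 'M[R]_nv).

Definition Lr (u : 'cV[R]_nu) (v : 'cV[R]_nv) (x : 'cV[R]_nx) : R :=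
  let r := F^T *m u + G^T *m v - c in
  gquad Sg b v + ip x r + sigma / 2 * ip r r.

Definition gfun (u : 'cV[R]_nu) (vk : 'cV[R]_nv) (x : 'cV[R]_nx) : 'cV[R]_nv :=
  Sg *m vk - b + G *m x + sigma *: (G *m (F^T *m u + G^T *m vk - c)).

Lemma gquadE v : gquad Sg b v = 2^-1 * qnorm Sg v - ip b v.
Proof. by []. Qed.

Lemma vstep u vk d x : Sg^T = Sg -> sigma != 0 ->
  Lr u (vk + d) x + sigma / 2 * qnorm (E - sigma^-1 *: Sg - G *m G^T) d
  = Lr u vk x + ip (gfun u vk x) d + sigma / 2 * qnorm E d.
Proof.
move=> sS s0; rewrite /Lr /gfun /=.
set r0 := F^T *m u + G^T *m vk - c.
have -> : F^T *m u + G^T *m (vk + d) - c = r0 + G^T *m d.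
  by rewrite /r0 mulmxDr addrA [RHS]addrAC.
rewrite !gquadE qnormD // ipq ipx.
rewrite !qnormBM qnormZM ipg ipDr.
field; exact: s0.
Qed.

Lemma hstep g d : E^T = E -> E \in unitmx -> sigma != 0 ->
  ip g d + sigma / 2 * qnorm E d =
  sigma / 2 * qnorm E (d + sigma^-1 *: (invmx E *m g))
  - (2 * sigma)^-1 * ip g (invmx E *m g).
Proof.
move=> sE uE s0; rewrite qnormD // ipMl sE.
rewrite /qnorm -scalemxAr mulKVmx // ipZr ipZl ipZr (ipC (invmx E *m g) g).
rewrite (ipC d g); field; exact: s0.
Qed.

Lemma gfunE u uk vk x : gfun u vk x =
  gfun uk vk x + sigma *: (G *m F^T *m (u - uk)).
Proof.
rewrite /gfun -[RHS]addrA -scalerDr -mulmxA -mulmxDr.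
congr (_ + sigma *: (G *m _)).
by rewrite mulmxBr [RHS]addrC !addrA subrK.
Qed.

Lemma deltaE uk vk x :
  b - G *m x - Sg *m vk + sigma *: (G *m (c - F^T *m uk - G^T *m vk))
  = - gfun uk vk x.
Proof.
rewrite /gfun !mulmxBr mulmxDr.
move: (G *m c) (G *m (F^T *m uk)) (G *m (G^T *m vk)) (G *m x) (Sg *m vk) => p q r s t.
apply/matrixP => i j; rewrite !mxE; ring.
Qed.

Lemma key Tf u uk v vk x : Sg^T = Sg -> sigma != 0 -> E^T = E -> E \in unitmx ->
  Lr u v x + (sigma / 2 * qnorm (Tf + F *m G^T *m invmx E *m G *m F^T) (u - uk)
             + sigma / 2 * qnorm (E - sigma^-1 *: Sg - G *m G^T) (v - vk))
  = Lr u vk x + (ip (delta_g Sg b F G c sigma E uk vk x) u + sigma / 2 * qnorm Tf (u - uk))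
    + (- ip (delta_g Sg b F G c sigma E uk vk x) uk
       - (2 * sigma)^-1 * ip (gfun uk vk x) (invmx E *m gfun uk vk x))
    + sigma / 2 * qnorm E (v - vk + sigma^-1 *: (invmx E *m gfun u vk x)).
Proof.
move=> sS s0 sE uE.
have sEi : (invmx E)^T = invmx E by rewrite trmx_inv sE.
set du := u - uk; set dv := v - vk.
have hv : v = vk + dv by rewrite /dv addrC subrK.
have h1 := vstep u vk dv x sS s0.
have h2 := hstep (gfun u vk x) dv sE uE s0.
set g0 := gfun uk vk x.
set q := F *m G^T *m invmx E *m g0.
set H := F *m G^T *m invmx E *m G *m F^T.
have h3 : ip (gfun u vk x) (invmx E *m gfun u vk x) =
    ip g0 (invmx E *m g0) + 2 * sigma * ip q du + sigma ^+ 2 * qnorm H du.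
  rewrite (gfunE u uk) -/g0 -/(qnorm (invmx E) _) qnormD // -/(qnorm (invmx E) g0).
  rewrite qnormZ qnormMM ipZr ipMr trmx_mul trmxK /q /H !mulmxA.
  ring.
have h4 : qnorm (Tf + H) du = qnorm Tf du + qnorm H du by rewrite qnormDM.
have h5 : delta_g Sg b F G c sigma E uk vk x = - q.
  by rewrite /delta_g deltaE mulmxN.
have h6 : ip q du = ip q u - ip q uk by rewrite /du ipBr.
rewrite {1}hv h4 h5 !ipNl.
have -> : Lr u (vk + dv) x = Lr u vk x + ip (gfun u vk x) dv
   + sigma / 2 * qnorm E dv - sigma / 2 * qnorm (E - sigma^-1 *: Sg - G *m G^T) dv.
  by rewrite -h1; ring.
have -> : ip (gfun u vk x) dv = sigma / 2 * qnorm E (dv + sigma^-1 *: (invmx E *m gfun u vk x))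
    - (2 * sigma)^-1 * ip (gfun u vk x) (invmx E *m gfun u vk x) - sigma / 2 * qnorm E dv.
  by rewrite -h2; ring.
rewrite h3 h6.
field; exact: s0.
Qed.
End T.

Lemma emono (R : realType) (e1 e2 : \bar R) (x1 x2 y1 y2 : R) :
  (e1 + x1%:E <= e2 + x2%:E)%E -> y1 - x1 <= y2 - x2 -> (e1 + y1%:E <= e2 + y2%:E)%E.
Proof.
case: e1 => [r1||]; case: e2 => [r2||] //=; rewrite -?EFinD ?lee_fin ?leey ?leNye //. move=> h1 h2; lra.
Qed.

Lemma pd_unit (R : realType) n (E : 'M[R]_n) : pd E -> E \in unitmx.
Proof.
case=> sE pE; rewrite unitmxE unitfE; apply/negP => /det0P [w w0 wE].
have : 0 < qnorm E w^T by apply: pE; rewrite trmx_eq0.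
by rewrite /qnorm -sE -trmx_mul wE trmx0 ip0r ltxx.
Qed.

Lemma pd_psd (R : realType) n (E : 'M[R]_n) w : pd E -> 0 <= qnorm E w.
Proof.
case=> _ pE; have [->|w0] := eqVneq w 0; first by rewrite /qnorm mulmx0 ip0r.
exact/ltW/pE.
Qed.
Unset Implicit Arguments.
Theorem proposition2p3 (R : realType) (nu nv nx : nat)
  (f : 'cV[R]_nu -> \bar R) (Sg : 'M[R]_nv) (b : 'cV[R]_nv)
  (F : 'M[R]_(nu, nx)) (G : 'M[R]_(nv, nx)) (c : 'cV[R]_nx)
  (sigma tau : R) (Eg : 'M[R]_nv) (Tf : 'M[R]_nu)
  (u : nat -> 'cV[R]_nu) (v : nat -> 'cV[R]_nv) (x : nat -> 'cV[R]_nx) :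
  closed_fun f -> proper_fun f -> convex_fun f ->
  psd Sg -> 0 < sigma -> 0 < tau ->
  pd Eg -> psd (Eg - sigma^-1 *: Sg - G *m G^T) ->
  psd Tf ->
  let Tg := Eg - sigma^-1 *: Sg - G *m G^T in
  let Tfh := Tf + F *m G^T *m invmx Eg *m G *m F^T in
  let L := Lsig f Sg b F G c sigma in
  (f (u 0%N) < +oo)%E ->
  (* Algorithm SCB-SPALM *)
  (forall k : nat, forall (u' : 'cV[R]_nu) (v' : 'cV[R]_nv),
     (L (u k.+1) (v k.+1) (x k)
        + (sigma / 2 * qnorm Tfh (u k.+1 - u k)
           + sigma / 2 * qnorm Tg (v k.+1 - v k))%:E
      <= L u' v' (x k)
        + (sigma / 2 * qnorm Tfh (u' - u k)
           + sigma / 2 * qnorm Tg (v' - v k))%:E)%E) ->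
  (forall k : nat,
     x k.+1 = x k + (tau * sigma) *: (F^T *m u k.+1 + G^T *m v k.+1 - c)) ->
  forall k : nat,
    let dk := delta_g Sg b F G c sigma Eg (u k) (v k) (x k) in
    (forall u' : 'cV[R]_nu,
       (L (u k.+1) (v k) (x k)
          + (ip dk (u k.+1) + sigma / 2 * qnorm Tf (u k.+1 - u k))%:E
        <= L u' (v k) (x k)
          + (ip dk u' + sigma / 2 * qnorm Tf (u' - u k))%:E)%E) /\
    (forall v' : 'cV[R]_nv,
       (L (u k.+1) (v k.+1) (x k) + (sigma / 2 * qnorm Tg (v k.+1 - v k))%:E
        <= L (u k.+1) v' (x k) + (sigma / 2 * qnorm Tg (v' - v k))%:E)%E) /\
    x k.+1 = x k + (tau * sigma) *: (F^T *m u k.+1 + G^T *m v k.+1 - c).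
Proof.
move=> _ _ _ [sS _] s0 t0 pdE _ _ Tg Tfh L _ Halg Hx k dk.
have sE := pdE.1; have uE := pd_unit pdE.
have s0' : sigma != 0 by rewrite gt_eqF.
have LE : forall u v x, L u v x = (f u + (Lr Sg b F G c sigma u v x)%:E)%E by [].
split; [|split; [|exact: Hx]].
- move=> u'.
  pose w := sigma^-1 *: (invmx Eg *m gfun Sg b F G c sigma u' (v k) (x k)).
  have H := Halg k u' (v k - w).
  rewrite !LE -!addeA -!EFinD in H *.
  apply: (emono H).
  rewrite /Tfh /Tg !(@key _ _ _ _ Sg b F G c sigma Eg) // /dk.
  have -> : v k - w - v k + w = 0 by rewrite (addrC (v k)) addrK addNr.
  have q0 : qnorm Eg 0 = 0 by rewrite /qnorm mulmx0 ip0r.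
  rewrite q0 mulr0.
  set S := qnorm Eg _.
  have : 0 <= sigma / 2 * S by apply: mulr_ge0; [lra | exact: pd_psd].
  lra.
- move=> v'.
  have H := Halg k (u k.+1) v'.
  rewrite !LE -!addeA -!EFinD in H *.
  apply: (emono H).
  lra.
Qed.
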